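(* Let $\Gamma$ be a single-player extensive-form game without chance nodes, and let $\mathscr C$ be the class of games that share the same game tree and infoset partition as $\Gamma$ (with arbitrary nonnegative utilities). Then $$\mathrm{VoR}^{\mathrm{opt}}(\mathscr C)=\max_{z\in\mathcal Z}\frac{1}{\alpha(z)}.$$
   Context: A single-player extensive-form game without chance nodes consists of a finite rooted tree (nodes $\mathcal H$, leaves $\mathcal Z$, actions $A_h$), all nonterminal nodes belonging to Player 1, a utility $u_1:\mathcal Z\to\mathbb R_{\ge0}$, and a partition $\mathcal I_1$ of nonterminal nodes into infosets with common action sets $A_I$. For a node $h$ with root-to-$h$ path $(h_0,\dots,h_{d-1})$, $\mathrm{obs}_1(h)=(I_k,a_k)_k$ lists infosets of and actions at the $h_k$. $\mathrm{pr}_1(\Gamma)$ has the same tree and utilities, with each infoset partitioned into classes of $h\sim h'\iff\mathrm{obs}_1(h)=\mathrm{obs}_1(h')$. $u_1(\mathrm{opt}(\cdot))$ is the maximum expected utility over behavioral strategies; $\mathrm{VoR}^{\mathrm{opt}}(\Gamma)=u_1(\mathrm{opt}(\mathrm{pr}_1(\Gamma)))/u_1(\mathrm{opt}(\Gamma))$ and $\mathrm{VoR}^{\mathrm{opt}}(\mathscr C)=\sup_{\Gamma'\in\mathscr C}\mathrm{VoR}^{\mathrm{opt}}(\Gamma')$. For $z\in\mathcal Z$ with path infosets/actions $(I_k,a_k)$ and $I\in\mathcal I_1$, $a\in A_I$: $n_z(I)=|\{k:I_k=I\}|$, $n_z(a)=|\{k:I_k=I,a_k=a\}|$, $p_z(a)=n_z(a)/n_z(I)$,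 $\alpha(z)=\prod_{I:n_z(I)>1}\prod_{a\in A_I:n_z(a)>0}p_z(a)^{n_z(a)}$. *)

(* Defs.v *)
From HB Require Import structures.
From mathcomp Require Import all_boot all_order all_algebra.
From mathcomp Require Import classical_sets reals.
Set Implicit Arguments. Unset Strict Implicit. Unset Printing Implicit Defensive.
Import Order.TTheory GRing.Theory Num.Theory.
Local Open Scope ring_scope.

(* A finite rooted game tree in which every nonterminal node is a decision
   node of Player 1 labelled by its infoset [I : Info]; the actions available
   at the node are the common action set [Act I] of the infoset, and the
   children are indexed by these actions.  Leaves carry a value of type [L]
   (the utility for a game, [unit] for the bare tree).  The infoset partition
   of the nonterminal nodes is the partition by label. *)
Inductive tree (Info : Type) (Act : Info -> finType) (L : Type) : Type :=
| Leaf of L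
| Node (I : Info) of (Act I -> tree Act L).
Arguments Leaf {Info Act L}.
Arguments Node {Info Act L}.

Fixpoint tree_map (Info : Type) (Act : Info -> finType) (L L' : Type)
  (f : L -> L') (t : tree Act L) : tree Act L' :=
  match t with
  | Leaf x => Leaf (f x)
  | Node i ch => Node i (fun a => tree_map f (ch a))
  end.

(* The underlying game tree together with its infoset partition. *)
Definition shape (Info : Type) (Act : Info -> finType) (L : Type)
  (t : tree Act L) : tree Act unit := tree_map (fun _ => tt) t.

Definition game (R : realType) (Info : Type) (Act : Info -> finType) :=
  tree Act R.

Definition obsT (Info : Type) (Act : Info -> finType) := {I : Info & Act I}.

Definition behavioral (R : realType) (Info : Type) (Act : Info -> finType)
  (s : forall I : Info, Act I -> R) : Prop :=
  forall I : Info, (forall a, 0 <= s I a) /\ \sum_(a : Act I) s I a = 1.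

Fixpoint EU (R : realType) (Info : Type) (Act : Info -> finType)
  (s : forall I : Info, Act I -> R) (t : game R Act) : R :=
  match t with
  | Leaf r => r
  | Node i ch => \sum_(a : Act i) s i a * EU s (ch a)
  end.

Definition opt_value (R : realType) (Info : Type) (Act : Info -> finType)
  (t : game R Act) : R :=
  sup [set EU s t | s in behavioral (Act := Act)]%classic.

(* pr_1(Gamma): same tree and utilities; the node h with label I and
   root-to-h observation sequence obs_1(h) = p is relabelled by the pair
   (I, p), so the new infosets are exactly the classes of
   h ~ h' <-> I(h) = I(h') /\ obs_1(h) = obs_1(h'). *)
Definition prAct (Info : Type) (Act : Info -> finType)
  (x : Info * seq (obsT Act)) : finType := Act x.1.

Fixpoint pr_aux (Info : Type) (Act : Info -> finType) (L : Type)
  (p : seq (obsT Act)) (t : tree Act L) : tree (@prAct Info Act) L :=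
  match t with
  | Leaf x => Leaf x
  | Node i ch => @Node _ (@prAct Info Act) L (i, p)
                   (fun a => pr_aux (rcons p (Tagged Act a)) (ch a))
  end.

Definition pr1 (Info : Type) (Act : Info -> finType) (L : Type)
  (t : tree Act L) := pr_aux [::] t.

(* Leaves, identified by their root-to-leaf sequence of (infoset, action). *)
Fixpoint leaves (Info : Type) (Act : Info -> finType) (L : Type)
  (t : tree Act L) : seq (seq (obsT Act)) :=
  match t with
  | Leaf _ => [:: [::]]
  | Node i ch =>
      flatten [seq [seq (Tagged Act a) :: z | z <- leaves (ch a)] | a : Act i]
  end.

Fixpoint leaf_values (Info : Type) (Act : Info -> finType) (L : Type)
  (t : tree Act L) : seq L :=
  match t with
  | Leaf x => [:: x]
  | Node i ch => flatten [seq leaf_values (ch a) | a : Act i]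
  end.

Section Alpha.
Variables (R : realType) (Info : eqType) (Act : Info -> finType).

Definition n_info (z : seq (obsT Act)) (I : Info) : nat :=
  count (fun o => tag o == I) z.
Definition n_act (z : seq (obsT Act)) (I : Info) (a : Act I) : nat :=
  count (fun o => o == Tagged Act a) z.
Definition p_act (z : seq (obsT Act)) (I : Info) (a : Act I) : R :=
  (n_act z a)%:R / (n_info z I)%:R.
Definition alpha (z : seq (obsT Act)) : R :=
  \prod_(I <- undup (map tag z) | (1 < n_info z I)%N)
     \prod_(a : Act I | (0 < n_act z a)%N) p_act z a ^+ n_act z a.
End Alpha.

(* VoR^opt(C) = sup over Gamma' in C of u(opt(pr(Gamma')))/u(opt(Gamma')),
   where C = games with the same tree and infoset partition as [t] and
   arbitrary nonnegative utilities (games with u(opt) = 0, i.e. all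
   utilities 0, are excluded since the ratio is 0/0 there). *)
Definition VoR_opt_class (R : realType) (Info : Type) (Act : Info -> finType)
  (t : game R Act) : R :=
  sup [set opt_value (pr1 t') / opt_value t' |
        t' in [set t' : game R Act | shape t' = shape t /\
               (forall r, r \in leaf_values t' -> 0 <= r) /\
               0 < opt_value t']]%classic.

(* Main.v *)
Require Import Defs.
From HB Require Import structures.
From mathcomp Require Import all_boot all_order all_algebra.
From mathcomp Require Import classical_sets reals.
From mathcomp Require Import ring lra.
From Stdlib Require Import FunctionalExtensionality.
Import Order.TTheory GRing.Theory Num.Theory.
Local Open Scope ring_scope.
Lemma wAGM (R : realFieldType) (A : finType) (x : A -> R) (n : A -> nat) :
  (forall a, 0 <= x a) -> (0 < \sum_a n a)%N ->
  \prod_a x a ^+ n a <=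
  ((\sum_a (n a)%:R * x a) / (\sum_a n a)%:R) ^+ (\sum_a n a).
Proof.
move=> x0 N0.
have [H _] := leif_AGM (I := {a : A & 'I_(n a)}) (A := predT)
   (E := fun p => x (tag p)) (fun p _ => x0 _).
have cardT : #|(predT : {pred {a : A & 'I_(n a)}})| = (\sum_a n a)%N.
  rewrite -sum1_card.
  rewrite -(sig_big_dep predT (fun _ => predT) (fun _ _ => 1%N)) /=.
  by apply: eq_bigr => a _; rewrite sum1_card card_ord.
have Hp : \prod_(i in (predT : {pred {a : A & 'I_(n a)}})) x (tag i) = \prod_a x a ^+ n a.
  rewrite -(sig_big_dep predT (fun _ => predT) (fun a _ => x a)) /=.
  by apply: eq_bigr => a _; rewrite prodr_const card_ord.
have Hs : \sum_(i in (predT : {pred {a : A & 'I_(n a)}})) x (tag i) = \sum_a (n a)%:R * x a.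
  rewrite -(sig_big_dep predT (fun _ => predT) (fun a _ => x a)) /=.
  by apply: eq_bigr => a _; rewrite sumr_const card_ord mulr_natl.
by move: H; rewrite cardT Hp Hs.
Qed.

Lemma distr_bound (R : realFieldType) (A : finType) (s : A -> R) (n : A -> nat) :
  (forall a, 0 <= s a) -> \sum_a s a = 1 -> (0 < \sum_a n a)%N ->
  \prod_a s a ^+ n a <= \prod_a ((n a)%:R / (\sum_b n b)%:R) ^+ n a.
Proof.
move=> s0 s1 N0; set N := (\sum_b n b)%N in N0 *.
have NR : (N%:R : R) != 0 by rewrite pnatr_eq0 -lt0n.
pose x a := s a * N%:R / (n a)%:R.
have e a : s a ^+ n a = ((n a)%:R / N%:R) ^+ n a * x a ^+ n a.
  case: (posnP (n a)) => [->|na]; first by rewrite !expr0 mulr1.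
  rewrite -exprMn /x; congr (_ ^+ _); field.
  by rewrite NR pnatr_eq0 -lt0n na.
rewrite (eq_bigr _ (fun a _ => e a)) big_split /=.
rewrite -[X in _ <= X]mulr1; apply: ler_wpM2l.
  by apply: prodr_ge0 => a _; apply: exprn_ge0; rewrite divr_ge0.
have x0 a : 0 <= x a by rewrite /x !mulr_ge0 ?invr_ge0.
apply: le_trans (@wAGM _ _ x n x0 N0) _; apply: exprn_ile1.
  by rewrite divr_ge0 // sumr_ge0 // => a _; rewrite mulr_ge0.
rewrite ler_pdivrMr ?ltr0n // mul1r.
have -> : (N%:R : R) = \sum_a s a * N%:R by rewrite -mulr_suml s1 mul1r.
apply: ler_sum => a _; rewrite /x.
case: (posnP (n a)) => [->|na]; first by rewrite mul0r mulr_ge0.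
by rewrite mulrC divfK // pnatr_eq0 -lt0n na.
Qed.
Lemma Tagged_eq {Info : eqType} {Act : Info -> finType} (I : Info) (a b : Act I) :
  ((Tagged Act a : obsT Act) == Tagged Act b) = (a == b).
Proof. by rewrite -tag_eqE /tag_eq /= eqxx tagged_asE. Qed.

Definition Pz {R : realType} {Info : eqType} {Act : Info -> finType}
  (s : forall I : Info, Act I -> R) (z : seq (obsT Act)) : R :=
  \prod_(o <- z) s (tag o) (tagged o).

Lemma group_tag {R : realType} {Info : eqType} {Act : Info -> finType}
  (F : obsT Act -> R) (z : seq (obsT Act)) :
  \prod_(o <- z) F o =
  \prod_(I <- undup (map tag z)) \prod_(o <- z | tag o == I) F o.
Proof.
under [RHS]eq_bigr do rewrite big_mkcond /=.
rewrite exchange_big /=; apply: eq_big_seq => o oz.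
rewrite (bigD1_seq (tag o)) ?undup_uniq ?mem_undup ?map_f //= eqxx.
by rewrite big1 ?mulr1 // => I /negbTE; rewrite eq_sym => ->.
Qed.

Lemma inner_tag {R : realType} {Info : eqType} {Act : Info -> finType}
  (s : forall I : Info, Act I -> R) (z : seq (obsT Act)) (I : Info) :
  \prod_(o <- z | tag o == I) s (tag o) (tagged o) =
  \prod_(a : Act I) s I a ^+ n_act z a.
Proof.
elim: z => [|[j b] z IH].
  by rewrite big_nil big1 // => a _; rewrite /n_act /= expr0.
rewrite big_cons /= IH.
have -> : \prod_(a : Act I) s I a ^+ n_act (Tagged Act b :: z) a =
   \prod_(a : Act I) s I a ^+ (Tagged Act b == Tagged Act a) *
   \prod_(a : Act I) s I a ^+ n_act z a.
  by rewrite -big_split /=; apply: eq_bigr => a _; rewrite /n_act /= exprD.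
case: (eqVneq j I) => [ejI|ne].
  subst j; rewrite /= ?eqxx; congr (_ * _).
  rewrite (bigD1 b) //= Tagged_eq eqxx expr1. rewrite big1 ?mulr1 //.
  by move=> a /negbTE ab; rewrite Tagged_eq eq_sym ab expr0.
rewrite [X in _ = X * _]big1 ?mul1r // => a _.
case: eqP => [/(congr1 tag) /= ejI|_]; last by rewrite expr0.
by rewrite ejI eqxx in ne.
Qed.

Lemma sum_nact {Info : eqType} {Act : Info -> finType}
  (z : seq (obsT Act)) (I : Info) :
  (\sum_(a : Act I) n_act z a)%N = n_info z I.
Proof.
elim: z => [|[j b] z IH].
  by rewrite big1 // => a _.
rewrite /n_info /= -/(n_info z I) -IH.
have -> : (\sum_(a : Act I) n_act (Tagged Act b :: z) a =
   \sum_(a : Act I) (Tagged Act b == Tagged Act a) +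
   \sum_(a : Act I) n_act z a)%N.
  by rewrite -big_split /=; apply: eq_bigr => a _; rewrite /n_act /=.
congr (_ + _)%N.
case: (eqVneq j I) => [ejI|ne].
  subst j; rewrite (bigD1 b) //= Tagged_eq eqxx big1 // => a /negbTE ab.
  by rewrite Tagged_eq eq_sym ab.
rewrite big1 // => a _.
case: eqP => [/(congr1 tag) /= ejI|_] //.
by rewrite ejI eqxx in ne.
Qed.

Lemma nact_le {Info : eqType} {Act : Info -> finType}
  (z : seq (obsT Act)) (I : Info) (a : Act I) :
  (n_act z a <= n_info z I)%N.
Proof. by apply: sub_count => o /eqP ->. Qed.

Lemma alphaE {R : realType} {Info : eqType} {Act : Info -> finType}
  (z : seq (obsT Act)) :
  alpha R z = \prod_(I <- undup (map tag z))
                \prod_(a : Act I) p_act R z a ^+ n_act z a.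
Proof.
rewrite /alpha big_mkcond /=; apply: eq_bigr => I _.
rewrite big_mkcond /=; case: ifP => h.
  by apply: eq_bigr => a _; case: (posnP (n_act z a)) => [->|na]; rewrite ?expr0 ?na.
apply/esym; rewrite big1 // => a _.
case: (posnP (n_act z a)) => [->|na]; first by rewrite expr0.
have := nact_le z I a; move: h na; rewrite /p_act.
case: (n_info z I) => [|[|k]] //; case: (n_act z a) => [|[|m]] //= _ _ _.
by rewrite divr1 expr1.
Qed.

Lemma PzE {R : realType} {Info : eqType} {Act : Info -> finType}
  (s : forall I : Info, Act I -> R) (z : seq (obsT Act)) :
  Pz s z = \prod_(I <- undup (map tag z)) \prod_(a : Act I) s I a ^+ n_act z a.
Proof.
rewrite /Pz (group_tag (fun o => s (tag o) (tagged o))).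
by apply: eq_bigr => I _; rewrite inner_tag.
Qed.
Definition sz {R : realType} {Info : eqType} {Act : Info -> finType}
  (z : seq (obsT Act)) : forall I : Info, Act I -> R :=
  fun I a => if (0 < n_info z I)%N then p_act R z a else #|Act I|%:R^-1.

Lemma unif_sum {R : realType} (A : finType) : (0 < #|A|)%N ->
  \sum_(a : A) (#|A|%:R^-1 : R) = 1.
Proof.
move=> A0; rewrite sumr_const -[#|xpredT|]/#|A| -[_ *+ #|A|]mulr_natr mulVf //.
by rewrite pnatr_eq0 -lt0n.
Qed.

Lemma sz_beh {R : realType} {Info : eqType} {Act : Info -> finType}
  (Hact : forall I : Info, (0 < #|Act I|)%N) (z : seq (obsT Act)) :
  behavioral (sz (R := R) z).
Proof.
move=> I; rewrite /sz; case: (boolP (0 < n_info z I)%N) => h;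
  rewrite ?h ?(negbTE h); split.
- by move=> a; rewrite /p_act divr_ge0.
- have -> : \sum_(a : Act I) p_act R z a =
     (\sum_(a : Act I) ((n_act z a)%:R : R)) / (n_info z I)%:R.
    by rewrite mulr_suml.
  have -> : \sum_(a : Act I) ((n_act z a)%:R : R) = (n_info z I)%:R.
    by rewrite -sum_nact natr_sum.
  rewrite mulfV //.
  by rewrite pnatr_eq0 -lt0n.
- by move=> a; rewrite invr_ge0.
- exact: unif_sum.
Qed.

Lemma ninfo_gt0 {Info : eqType} {Act : Info -> finType}
  (z : seq (obsT Act)) (I : Info) :
  I \in undup (map tag z) -> (0 < n_info z I)%N.
Proof.
rewrite mem_undup => /mapP [o oz ->].
by rewrite /n_info -has_count; apply/hasP; exists o.
Qed.

Lemma Pz_sz {R : realType} {Info : eqType} {Act : Info -> finType}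
  (z : seq (obsT Act)) : Pz (sz (R := R) z) z = alpha R z.
Proof.
rewrite PzE alphaE big_seq [RHS]big_seq; apply: eq_bigr => I IU.
by apply: eq_bigr => a _; rewrite /sz ninfo_gt0.
Qed.

Lemma Pz_le {R : realType} {Info : eqType} {Act : Info -> finType}
  (s : forall I : Info, Act I -> R) (z : seq (obsT Act)) :
  behavioral s -> Pz s z <= alpha R z.
Proof.
move=> bs; rewrite PzE alphaE big_seq [X in _ <= X]big_seq.
apply: ler_prod => I IU; have [s0 s1] := bs I; apply/andP; split.
  by apply: prodr_ge0 => a _; apply: exprn_ge0.
have := @distr_bound R (Act I) (s I) (fun a => n_act z a) s0 s1.
rewrite sum_nact; move/(_ (ninfo_gt0 _ _ IU)).
by rewrite /p_act.
Qed.

Lemma alpha_gt0 {R : realType} {Info : eqType} {Act : Info -> finType}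
  (z : seq (obsT Act)) : 0 < alpha R z.
Proof.
apply: prodr_gt0 => I _; apply: prodr_gt0 => a na.
apply: exprn_gt0; rewrite /p_act divr_gt0 // ltr0n //.
exact: leq_trans na (nact_le z I a).
Qed.

Lemma bigmax_mem {T : eqType} {R : realDomainType} (s : seq T) (f : T -> R) :
  \big[Num.max/0]_(z <- s) f z = 0 \/
  exists2 z, z \in s & \big[Num.max/0]_(z <- s) f z = f z.
Proof.
elim: s => [|x s IH]; first by left; rewrite big_nil.
rewrite big_cons maxEle; case: ifP => _.
  case: IH => [->|[z zs ->]]; first by left.
  by right; exists z => //; rewrite inE zs orbT.
by right; exists x => //; rewrite inE eqxx.
Qed.
Inductive at_leaf {Info : Type} {Act : Info -> finType} {L : Type} :
  tree Act L -> seq (obsT Act) -> L -> Prop :=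
| AL_leaf (x : L) : at_leaf (Leaf x) [::] x
| AL_node (I : Info) (ch : Act I -> tree Act L) (a : Act I) z x :
    at_leaf (ch a) z x -> at_leaf (Node I ch) (Tagged Act a :: z) x.

Lemma lv_sub' {Info : Type} {Act : Info -> finType} {L : eqType}
  (I : Info) (ch : Act I -> tree Act L) (a : Act I) (r : L) :
  r \in leaf_values (ch a) -> r \in leaf_values (Node I ch).
Proof.
move=> ra /=; apply/flattenP; exists (leaf_values (ch a)) => //.
by apply: map_f; rewrite mem_enum.
Qed.

Lemma EU_ge0 {R : realType} {Info : Type} {Act : Info -> finType}
  (s : forall I : Info, Act I -> R) (t : game R Act) :
  (forall I a, 0 <= s I a) ->
  (forall r, r \in leaf_values t -> 0 <= r) -> 0 <= EU s t.
Proof.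
move=> s0; elim: t => [r|I ch IH] /= h; first by apply: h; rewrite inE.
apply: sumr_ge0 => a _; rewrite mulr_ge0 // IH // => r ra.
by apply: h; apply: lv_sub' ra.
Qed.

Lemma EU_le {R : realType} {Info : Type} {Act : Info -> finType}
  (s : forall I : Info, Act I -> R) (t : game R Act) (B : R) :
  behavioral s ->
  (forall r, r \in leaf_values t -> r <= B) -> EU s t <= B.
Proof.
move=> bs; elim: t => [r|I ch IH] /= h; first by apply: h; rewrite inE.
have [s0 s1] := bs I.
apply: le_trans (_ : \sum_a s I a * B <= B).
  apply: ler_sum => a _; apply: ler_wpM2l => //; apply: IH => r ra.
  by apply: h; apply: lv_sub' ra.
by rewrite -mulr_suml s1 mul1r.
Qed.

Lemma EU_ge_leaf {R : realType} {Info : eqType} {Act : Info -> finType}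
  (s : forall I : Info, Act I -> R) (t : game R Act) z u :
  (forall I a, 0 <= s I a) ->
  (forall r, r \in leaf_values t -> 0 <= r) ->
  at_leaf t z u -> u * Pz s z <= EU s t.
Proof.
move=> s0 + H; elim: H => [x|I ch a z' x H IH] /= h.
  by rewrite /Pz big_nil mulr1.
rewrite /Pz big_cons /= -/(Pz s z') (bigD1 a) //=.
have h' : forall r, r \in leaf_values (ch a) -> 0 <= r.
  by move=> r ra; apply: h; apply: lv_sub' ra.
apply: le_trans (_ : s I a * EU s (ch a) <= _).
  by rewrite mulrCA; apply: ler_wpM2l => //; apply: IH.
rewrite lerDl; apply: sumr_ge0 => b _; rewrite mulr_ge0 // EU_ge0 // => r rb.
by apply: h; apply: lv_sub' rb.
Qed.

Lemma lv_pr {Info : eqType} {Act : Info -> finType} {L : Type}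
  (p : seq (obsT Act)) (t : tree Act L) :
  leaf_values (pr_aux p t) = leaf_values t.
Proof.
elim: t p => [x|I ch IH] p //=.
congr flatten; apply: eq_map => a; exact: IH.
Qed.
Definition sp {R : realType} {Info : eqType} {Act : Info -> finType}
  (w : seq (obsT Act)) : forall x : Info * seq (obsT Act), prAct x -> R :=
  fun x a =>
    match [pick b : Act x.1 | take (size x.2).+1 w == rcons x.2 (Tagged Act b)] with
    | Some b => ((b == a) : nat)%:R
    | None => #|Act x.1|%:R^-1
    end.

Lemma sp_beh {R : realType} {Info : eqType} {Act : Info -> finType}
  (Hact : forall I : Info, (0 < #|Act I|)%N) (w : seq (obsT Act)) :
  behavioral (sp (R := R) w).
Proof.
move=> x; rewrite /sp; case: pickP => [b _|_]; split.
- by move=> a; rewrite ler0n.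
- rewrite (bigD1 b) //= eqxx big1 ?addr0 // => a /negbTE.
  by rewrite eq_sym => ->.
- by move=> a; rewrite invr_ge0.
- exact: (@unif_sum R (Act x.1) (Hact x.1)).
Qed.

Lemma sp_ge0 {R : realType} {Info : eqType} {Act : Info -> finType}
  (w : seq (obsT Act)) x a : 0 <= sp (R := R) w x a.
Proof. by rewrite /sp; case: pickP => [b _|_]; rewrite ?ler0n ?invr_ge0. Qed.

Lemma pr_ge {R : realType} {Info : eqType} {Act : Info -> finType}
  (t : game R Act) z u :
  (forall r, r \in leaf_values t -> 0 <= r) ->
  at_leaf t z u -> forall p, u <= EU (sp (p ++ z)) (pr_aux p t).
Proof.
move=> + H; elim: H => [x|I ch a z' x H IH] /= h p; first by [].
have h' : forall r, r \in leaf_values (ch a) -> 0 <= r.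
  by move=> r ra; apply: h; apply: lv_sub' ra.
rewrite (bigD1 a) //=.
have -> : sp (R := R) (p ++ Tagged Act a :: z') (I, p) a = 1.
  rewrite /sp /=; case: pickP => [b|/(_ a)].
    rewrite take_cat ltnNge leqnSn /= subSnn /= take0 cats1.
    move/eqP/rcons_inj => [] /eqP; rewrite Tagged_eq => /eqP ->.
    by rewrite eqxx.
  by rewrite take_cat ltnNge leqnSn /= subSnn /= take0 cats1 eqxx.
rewrite mul1r -[x]addr0; apply: lerD.
  by have := IH h' (rcons p (Tagged Act a)); rewrite cat_rcons.
apply: sumr_ge0 => b _; rewrite mulr_ge0 ?sp_ge0 // EU_ge0 //.
  by move=> ? ?; apply: sp_ge0.
by move=> r; rewrite lv_pr => rb; apply: h; apply: lv_sub' rb.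
Qed.
Definition nextr {Info : eqType} {Act : Info -> finType}
  (r : option (seq (obsT Act))) (x : obsT Act) : option (seq (obsT Act)) :=
  match r with Some (y :: rest) => if y == x then Some rest else None
             | _ => None end.

Fixpoint mark {R : realType} {Info : eqType} {Act : Info -> finType} {L : Type}
  (r : option (seq (obsT Act))) (t : tree Act L) : game R Act :=
  match t with
  | Leaf _ => Leaf (if r is Some [::] then 1 else 0)
  | Node i ch => Node i (fun a => mark (nextr r (Tagged Act a)) (ch a))
  end.

Lemma mark_shape {R : realType} {Info : eqType} {Act : Info -> finType} {L : Type}
  (r : option (seq (obsT Act))) (t : tree Act L) :
  Defs.shape (mark (R := R) r t) = Defs.shape t.
Proof.
rewrite /Defs.shape; elim: t r => [x|I ch IH] r //=.
congr (Node I _); apply: functional_extensionality => a; exact: IH.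
Qed.

Lemma mark_lv {R : realType} {Info : eqType} {Act : Info -> finType} {L : Type}
  (r : option (seq (obsT Act))) (t : tree Act L) (v : R) :
  v \in leaf_values (mark r t) -> 0 <= v <= 1.
Proof.
elim: t r => [x|I ch IH] r /=.
  by rewrite inE => /eqP ->; case: r => [[|? ?]|] //=; rewrite ?lexx ?ler01.
case/flattenP => s /mapP [a _ ->]; exact: IH.
Qed.

Lemma mark_at {R : realType} {Info : eqType} {Act : Info -> finType} {L : Type}
  (t : tree Act L) (z : seq (obsT Act)) :
  z \in leaves t -> at_leaf (mark (R := R) (Some z) t) z 1.
Proof.
elim: t z => [x|I ch IH] z /=.
  by rewrite inE => /eqP ->; constructor.
case/flattenP => s /mapP [a _ ->] /mapP [z' z'in ->].
apply: AL_node; rewrite /= eqxx; exact: IH.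
Qed.

Lemma mark_EU {R : realType} {Info : eqType} {Act : Info -> finType} {L : Type}
  (s : forall I : Info, Act I -> R) (t : tree Act L) (r : option (seq (obsT Act))) :
  (forall I a, 0 <= s I a) ->
  EU s (mark r t) <= (if r is Some z then Pz s z else 0).
Proof.
move=> s0; elim: t r => [x|I ch IH] r /=.
  case: r => [[|? ?]|] //=; first by rewrite /Pz big_nil.
  by apply: prodr_ge0 => o _; apply: s0.
apply: le_trans (_ : \sum_a s I a *
   (if nextr r (Tagged Act a) is Some z then Pz s z else 0) <= _).
  by apply: ler_sum => a _; apply: ler_wpM2l => //; apply: IH.
case: r => [[|[j c] rest]|] /=.
- rewrite big1; [by rewrite /Pz big_nil ler01 | by move=> a _; rewrite mulr0].
- case: (eqVneq j I) => [ejI|ne].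
    subst j; rewrite (bigD1 c) //= Tagged_eq eqxx big1 ?addr0.
      by rewrite /Pz big_cons.
    by move=> a /negbTE ac; rewrite Tagged_eq eq_sym ac mulr0.
  rewrite big1; first by apply: prodr_ge0 => o _; apply: s0.
  move=> a _; case: eqP => [/(congr1 tag) /= ejI|_]; last by rewrite mulr0.
  by rewrite ejI eqxx in ne.
- by rewrite big1 // => a _; rewrite mulr0.
Qed.

Lemma leaves_map {Info : Type} {Act : Info -> finType} {L L' : Type}
  (f : L -> L') (t : tree Act L) : leaves (tree_map f t) = leaves t.
Proof.
elim: t => [x|I ch IH] //=.
by congr flatten; apply: eq_map => a; rewrite IH.
Qed.

Lemma lv_at {Info : eqType} {Act : Info -> finType} {L : eqType}
  (t : tree Act L) (r : L) :
  r \in leaf_values t -> exists2 z, z \in leaves t & at_leaf t z r.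
Proof.
elim: t => [x|I ch IH] /=.
  by rewrite inE => /eqP ->; exists [::]; [rewrite inE | constructor].
case/flattenP => s /mapP [a _ ->] /IH [z zin H].
exists (Tagged Act a :: z); last by constructor.
apply/flattenP; exists [seq Tagged Act a :: z0 | z0 <- leaves (ch a)].
  by apply: map_f; rewrite mem_enum.
exact: map_f.
Qed.

Lemma leaves_ne {Info : eqType} {Act : Info -> finType} {L : Type}
  (Hact : forall I : Info, (0 < #|Act I|)%N) (t : tree Act L) :
  exists z, z \in leaves t.
Proof.
elim: t => [x|I ch IH] /=; first by exists [::]; rewrite inE.
have [a _] := card_gt0P (Hact I); have [z zin] := IH a.
exists (Tagged Act a :: z); apply/flattenP.
exists [seq Tagged Act a :: z0 | z0 <- leaves (ch a)].
  by apply: map_f; rewrite mem_enum.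
exact: map_f.
Qed.
Lemma unif_beh {R : realType} {Info : Type} {Act : Info -> finType}
  (Hact : forall I : Info, (0 < #|Act I|)%N) :
  behavioral (fun I (a : Act I) => (#|Act I|%:R^-1 : R)).
Proof.
move=> I; split; first by move=> a; rewrite invr_ge0.
exact: unif_sum.
Qed.

Lemma opt_le {R : realType} {Info : Type} {Act : Info -> finType}
  (Hact : forall I : Info, (0 < #|Act I|)%N) (t : game R Act) (B : R) :
  (forall s, behavioral s -> EU s t <= B) -> opt_value t <= B.
Proof.
rewrite /opt_value => h; apply: ge_sup.
  by exists (EU (fun I (a : Act I) => (#|Act I|%:R^-1 : R)) t);
     exists (fun I (a : Act I) => (#|Act I|%:R^-1 : R)) => //; exact: unif_beh.
by move=> y [s bs <-]; exact: h.
Qed.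

Lemma opt_ge {R : realType} {Info : Type} {Act : Info -> finType}
  (t : game R Act) (B : R) s :
  behavioral s -> (forall s, behavioral s -> EU s t <= B) ->
  EU s t <= opt_value t.
Proof.
move=> bs h; rewrite /opt_value; apply: ub_le_sup.
  by exists B => y [s' bs' <-]; exact: h.
by exists s.
Qed.

Theorem corollary3 (R : realType) (Info : eqType) (Act : Info -> finType)
  (Hact : forall I : Info, (0 < #|Act I|)%N)
  (t : game R Act) (Hnonneg : forall r, r \in leaf_values t -> 0 <= r) :
  VoR_opt_class t =
  \big[Num.max/0]_(z <- leaves t) (alpha R z)^-1.
Proof.
set M := \big[Num.max/0]_(z <- leaves t) (alpha R z)^-1.
have Mub z : z \in leaves t -> (alpha R z)^-1 <= M.
  by move=> zin; exact: (le_bigmax_seq 0 z xpredT (fun z => (alpha R z)^-1) zin isT).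
have Hact' : forall x : Info * seq (obsT Act), (0 < #|prAct x|)%N.
  by move=> x; exact: Hact.
rewrite /VoR_opt_class.
set S := [set _ | _ in _]%classic.
have ubS : forall y, S y -> y <= M.
  move=> y [t' [sh [nn pos]] <-].
  have ltt : leaves t' = leaves t.
    by have := congr1 (@leaves _ Act unit) sh; rewrite /Defs.shape !leaves_map.
  set B := \big[Num.max/0]_(r <- leaf_values t') r.
  have Bub r : r \in leaf_values t' -> r <= B by move=> rin; exact: (le_bigmax_seq 0 r xpredT (fun r => r) rin isT).
  have optB : opt_value t' <= B.
    by apply: (opt_le Hact) => s bs; apply: EU_le.
  have B0 : 0 < B := lt_le_trans pos optB.
  have [B0'|[r rin Br]] := bigmax_mem (leaf_values t') (fun r => r).
    have BB : B = 0 := B0'.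
    by rewrite BB ltxx in B0.
  have BB : B = r := Br.
  have [zs zsin Hz] := lv_at _ _ rin.
  rewrite ltt in zsin.
  have opr : opt_value (pr1 t') <= B.
    apply: (opt_le Hact') => s bs; apply: EU_le => // r'.
    by rewrite /pr1 lv_pr; apply: Bub.
  have ot : B * alpha R zs <= opt_value t'.
    apply: le_trans (opt_ge _ _ _ (sz_beh Hact zs) (fun s bs => EU_le _ _ _ bs Bub)).
    rewrite -Pz_sz BB; apply: EU_ge_leaf => //.
    by move=> I a; have [] := sz_beh (R := R) Hact zs I.
  have a0 := alpha_gt0 (R := R) zs.
  apply: le_trans (Mub _ zsin).
  rewrite ler_pdivrMr //; apply: le_trans opr _.
  apply: le_trans (_ : (alpha R zs)^-1 * (B * alpha R zs) <= _).
    by rewrite mulrCA mulVf ?mulr1 // gt_eqF.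
  by apply: ler_wpM2l => //; rewrite invr_ge0 ltW.
have SM : S M.
  have [z0 z0in] := leaves_ne Hact t.
  have M0 : 0 < M.
    by apply: lt_le_trans (Mub _ z0in); rewrite invr_gt0 alpha_gt0.
  have [M0'|[zs zsin Mz]] := bigmax_mem (leaves t) (fun z => (alpha R z)^-1).
    have MM : M = 0 := M0'.
    by rewrite MM ltxx in M0.
  have MM : M = (alpha R zs)^-1 := Mz.
  pose t' : game R Act := mark (R := R) (Some zs) t.
  have nn : forall r, r \in leaf_values t' -> 0 <= r.
    by move=> r /mark_lv /andP [].
  have le1 : forall r, r \in leaf_values t' -> r <= 1.
    by move=> r /mark_lv /andP [].
  have Hat : at_leaf t' zs 1 := mark_at _ _ zsin.
  have a0 := alpha_gt0 (R := R) zs.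
  have ot1 : alpha R zs <= opt_value t'.
    apply: le_trans (opt_ge _ _ _ (sz_beh Hact zs) (fun s bs => EU_le _ _ _ bs le1)).
    rewrite -Pz_sz -[X in X <= _]mul1r; apply: EU_ge_leaf => //.
    by move=> I a; have [] := sz_beh (R := R) Hact zs I.
  have ot2 : opt_value t' <= alpha R zs.
    apply: (opt_le Hact) => s bs.
    apply: le_trans (Pz_le _ _ bs).
    apply: (mark_EU s t (Some zs)) => I a; by have [] := bs I.
  have opr : 1 <= opt_value (pr1 t').
    have bsp := sp_beh (R := R) Hact zs.
    apply: le_trans (opt_ge _ _ _ bsp _); first exact: (pr_ge _ _ _ nn Hat [::]).
    move=> s bs; apply: EU_le => // r; rewrite /pr1 lv_pr; exact: le1.
  have pos : 0 < opt_value t' := lt_le_trans a0 ot1.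
  have inS : S (opt_value (pr1 t') / opt_value t').
    exists t' => //; split; first exact: mark_shape.
    by split.
  exists t'; first by split; [exact: mark_shape | split].
  apply/le_anti/andP; split; first exact: ubS.
  rewrite ler_pdivlMr // MM.
  apply: le_trans opr; rewrite -(mulVf (negbT (gt_eqF a0))).
  by apply: ler_wpM2l => //; rewrite invr_ge0 ltW.
apply/le_anti/andP; split.
  by apply: ge_sup; [exists M | exact: ubS].
by apply: ub_le_sup; [exists M | ].
Qed.
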